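(* Let $X$ be a metric space with integer valued metric. Then for every $f\in\mathrm{E}(X)$ and every integer $m\ge1$ there exists a function $f'\in\mathrm{E}'(X)$ with values in $\frac1m\mathbb{Z}$ such that $\|f-f'\|_\infty\le\frac1{2m}$.
   Context: $\Delta(X)=\{f\in\mathbb R^X: f(x)+f(y)\ge d(x,y)\ \forall x,y\in X\}$ with the pointwise order; $\mathrm{E}(X)$ is its set of minimal elements. For $f\colon X\to\mathbb R$, $A(f)$ is the set of unordered pairs $\{x,y\}$ ($x=y$ allowed) with $f(x)+f(y)=d(x,y)$, and $\mathrm{E}'(X)=\{f\in\Delta(X):\bigcup A(f)=X\}$ (a subset of $\mathrm{E}(X)$). $\|f-g\|_\infty=\sup_x|f(x)-g(x)|$. *)

(* Defs.v *)
From Stdlib Require Import Reals ZArith.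
Open Scope R_scope.

Definition is_metric {X : Type} (d : X -> X -> R) : Prop :=
  (forall x y, d x y = 0 <-> x = y) /\
  (forall x y, d x y = d y x) /\
  (forall x y z, d x z <= d x y + d y z).

Definition integer_valued {X : Type} (d : X -> X -> R) : Prop :=
  forall x y, exists n : Z, d x y = IZR n.

Definition Delta {X : Type} (d : X -> X -> R) (f : X -> R) : Prop :=
  forall x y, f x + f y >= d x y.

Definition E {X : Type} (d : X -> X -> R) (f : X -> R) : Prop :=
  Delta d f /\
  forall g : X -> R, Delta d g -> (forall x, g x <= f x) -> forall x, g x = f x.

Definition in_A {X : Type} (d : X -> X -> R) (f : X -> R) (x y : X) : Prop :=
  f x + f y = d x y.

(* E'(X) = { f in Delta(X) : union of A(f) = X } *)
Definition E' {X : Type} (d : X -> X -> R) (f : X -> R) : Prop :=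
  Delta d f /\ forall x, exists y, in_A d f x y.

(* Main.v *)
Require Import Defs.
From Stdlib Require Import Reals ZArith.
From Stdlib Require Import Lra Lia Psatz Classical ClassicalDescription.
Open Scope R_scope.

Lemma divsum_eq (m p q d : R) : 0 < m -> p + q = m*d -> p/m + q/m = d.
Proof. intros Hm E. replace (p/m+q/m) with ((p+q)/m) by (field; lra). rewrite E. field. lra. Qed.

Lemma divsum_ge (m p q d : R) : 0 < m -> p + q >= m*d -> p/m + q/m >= d.
Proof. intros Hm E. replace (p/m+q/m) with ((p+q)/m) by (field; lra).
  apply Rle_ge. apply (Rmult_le_reg_r m); [lra|].
  unfold Rdiv. rewrite Rmult_assoc, Rinv_l by lra. lra. Qed.

Lemma minimal_pt (X : Type) (d : X -> X -> R) (hd : is_metric d) (f : X -> R)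
  (hf : E d f) x eps : 0 < eps -> exists y, f x + f y < d x y + eps.
Proof.
  intros He. apply NNPP. intro Hn.
  assert (Hall : forall y, f x + f y >= d x y + eps).
  { intro y. apply Rnot_lt_ge. intro C. apply Hn. exists y. exact C. }
  destruct hd as [h0 [hs ht]].
  set (g := fun z => if excluded_middle_informative (z = x) then f x - eps/2 else f z).
  assert (Hxx : d x x = 0) by (apply h0; reflexivity).
  assert (Dg : Defs.Delta d g).
  { intros u v. unfold g.
    destruct (excluded_middle_informative (u = x)) as [->|nu];
    destruct (excluded_middle_informative (v = x)) as [->|nv].
    - specialize (Hall x). lra.
    - specialize (Hall v). lra.
    - specialize (Hall u). rewrite (hs u x). lra.
    - destruct hf as [hf _]. apply hf. }
  assert (Lg : forall z, g z <= f z).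
  { intro z. unfold g. destruct (excluded_middle_informative (z = x)); subst; lra. }
  pose proof (proj2 hf g Dg Lg x) as Eq. unfold g in Eq.
  destruct (excluded_middle_informative (x = x)) as [_|c]; [lra|now apply c].
Qed.

Definition fl (t : R) : Z := (up t - 1)%Z.
Lemma fl_spec t : t - 1 < IZR (fl t) <= t.
Proof. unfold fl. rewrite minus_IZR. destruct (archimed t). simpl. lra. Qed.

Lemma Z_of_lt (p q : Z) : IZR p < IZR q + 1 -> (p <= q)%Z.
Proof. intro H. rewrite <- plus_IZR in H. apply lt_IZR in H. lia. Qed.

Module ZL.
From mathcomp Require Import all_boot classical_sets.
From Stdlib Require Import Classical.

Lemma max_indep (X:Type) (H : X -> Prop) (G : X -> X -> Prop) :
  (forall x y, G x y -> G y x) ->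
  exists S : X -> Prop, (forall x, S x -> H x) /\
   (forall x y, S x -> S y -> ~ G x y) /\
   (forall x, H x -> ~ G x x -> ~ S x -> exists y, S y /\ G x y).
Proof.
intros Gs.
pose P := fun A : set X => (forall x, A x -> H x) /\ (forall x y, A x -> A y -> ~ G x y).
have [A [[AH Ai] Am]] : exists A, P A /\ forall B, proper A B -> ~ P B.
  apply: Zorn_bigcup => F FP Ft; split.
    by move=> x [Y FY Yx]; exact: (proj1 (FP _ FY)).
  move=> x y [Y FY Yx] [Z FZ Zy].
  case: (Ft _ _ FY FZ) => [YZ|ZY].
    by apply: (proj2 (FP _ FZ)); [exact: YZ|].
  by apply: (proj2 (FP _ FY)); [|exact: ZY].
exists A; split; first exact AH; split; first exact Ai.
move=> x Hx Gxx nAx.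
apply: NNPP => hno.
apply: (Am (fun z => A z \/ z = x)).
  split; first by move=> z Az; left.
  by move=> /(_ x (or_intror erefl)).
split.
  by move=> z /= [Az|Ez]; [exact: AH|rewrite Ez].
move=> u v /= [Au|Eu] [Av|Ev].
- exact: Ai.
- move=> Guv; apply: hno; exists u; split => //; rewrite -Ev; exact: Gs.
- move=> Gxv; apply: hno; exists v; split => //; rewrite -Eu; done.
- by rewrite Eu Ev.
Qed.
End ZL.

Theorem proposition4p4 (X : Type) (d : X -> X -> R)
  (hd : is_metric d) (hint : integer_valued d)
  (f : X -> R) (hf : E d f) (m : nat) (hm : (1 <= m)%nat) :
  exists f' : X -> R,
    E' d f' /\
    (forall x, exists k : Z, f' x = IZR k / INR m) /\
    (forall x, Rabs (f x - f' x) <= 1 / (2 * INR m)).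
Proof.
  assert (mpos : 0 < INR m) by (apply lt_0_INR; lia).
  pose proof hd as [h0 [hs ht]].
  set (a := fun x => INR m * f x).
  assert (Dint : forall x y, exists D : Z, IZR D = INR m * d x y).
  { intros x y. destruct (hint x y) as [n hn]. exists (Z.of_nat m * n)%Z.
    rewrite mult_IZR, <- INR_IZR_INZ, hn. reflexivity. }
  assert (fD : forall x y, f x + f y >= d x y) by (destruct hf as [hf _]; exact hf).
  set (Hh := fun x => exists k : Z, a x = IZR k + 1/2).
  set (G := fun x y => Hh x /\ Hh y /\ f x + f y = d x y).
  assert (Gs : forall x y, G x y -> G y x).
  { intros x y [p [q r]]. split; [exact q|split; [exact p|]]. rewrite hs. lra. }
  destruct (ZL.max_indep X Hh G Gs) as [S [SH [Si Sm]]].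
  set (N := fun x => fl (a x + 1/2)).
  assert (HN : forall x, a x - 1/2 < IZR (N x) <= a x + 1/2).
  { intro x. unfold N. pose proof (fl_spec (a x + 1/2)). lra. }
  assert (HNh : forall x, Hh x -> IZR (N x) = a x + 1/2).
  { intros x [k hk]. pose proof (HN x) as HNx. rewrite hk in HNx |- *.
    assert (E1 : (N x <= k + 1)%Z).
    { apply Z_of_lt. rewrite plus_IZR. simpl. lra. }
    assert (E2 : (k + 1 <= N x)%Z).
    { apply Z_of_lt. rewrite plus_IZR. simpl. lra. }
    assert (N x = k + 1)%Z by lia. rewrite H, plus_IZR. simpl. lra. }
  set (Rz := fun x => if excluded_middle_informative (S x) then (N x - 1)%Z else N x).
  assert (KR : forall x, a x - 1/2 <= IZR (Rz x) <= a x + 1/2 /\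
     (S x -> IZR (Rz x) = a x - 1/2) /\ (~ S x -> a x - 1/2 < IZR (Rz x))).
  { intro x. unfold Rz. destruct (excluded_middle_informative (S x)) as [sx|nsx].
    - rewrite minus_IZR, (HNh x (SH x sx)). simpl. split; [lra|split; [intros; lra|tauto]].
    - pose proof (HN x). split; [lra|split; [tauto|intros; lra]]. }
  set (f' := fun x => IZR (Rz x) / INR m).
  assert (IZf : forall x, IZR (Rz x) = INR m * f' x).
  { intro x. unfold f'. field. lra. }
  assert (Gxx : forall x, Hh x -> ~ G x x).
  { intros x [k hk] [_ [_ e]]. assert (d x x = 0) by (apply h0; reflexivity).
    assert (a x = 0) by (unfold a; nra).
    assert (E3 : IZR (2*k+1) = 0) by (rewrite plus_IZR, mult_IZR; simpl; lra).
    apply eq_IZR in E3. lia. }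
  assert (ZD : forall x y D, IZR D = INR m * d x y -> (D <= Rz x + Rz y)%Z).
  { intros x y D hD. pose proof (fD x y) as fxy.
    assert (abD : a x + a y >= IZR D) by (unfold a; rewrite hD; nra).
    destruct (KR x) as [[kx1 kx2] [kx3 kx4]].
    destruct (KR y) as [[ky1 ky2] [ky3 ky4]].
    destruct (classic (S x)) as [sx|nsx]; destruct (classic (S y)) as [sy|nsy].
    - destruct (SH x sx) as [k hk]. destruct (SH y sy) as [l hl].
      destruct (Req_dec (f x + f y) (d x y)) as [eq|ne].
      + exfalso. apply (Si x y sx sy). split; [exact (SH x sx)|split; [exact (SH y sy)|exact eq]].
      + assert (gt : f x + f y > d x y) by (specialize (fD x y); lra).
        assert (abg : a x + a y > IZR D) by (unfold a; rewrite hD; nra).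
        assert (E4 : IZR D < IZR (k + l + 1)) by (rewrite !plus_IZR; simpl; lra).
        apply lt_IZR in E4.
        assert (E5 : IZR (D + 1) <= IZR (k + l + 1)) by (apply IZR_le; lia).
        apply le_IZR. rewrite plus_IZR. rewrite !plus_IZR in E5. simpl in E5.
        specialize (kx3 sx). specialize (ky3 sy). lra.
    - apply Z_of_lt. rewrite plus_IZR. specialize (ky4 nsy). lra.
    - apply Z_of_lt. rewrite plus_IZR. specialize (kx4 nsx). lra.
    - apply Z_of_lt. rewrite plus_IZR. specialize (kx4 nsx). lra. }
  exists f'. split; [split|split].
  - intros x y. destruct (Dint x y) as [D hD]. pose proof (ZD x y D hD) as z.
    apply IZR_le in z. rewrite plus_IZR, !IZf, hD in z. nra.
  - intro x. unfold in_A.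
    destruct (classic (Hh x /\ ~ S x)) as [[hx nsx]|oth].
    + destruct (Sm x hx (Gxx x hx) nsx) as [y [sy [_ [_ gxy]]]].
      exists y. destruct (KR y) as [_ [ky3 _]]. specialize (ky3 sy).
      assert (ex : IZR (Rz x) = a x + 1/2).
      { unfold Rz. destruct (excluded_middle_informative (S x)); [tauto|]. apply HNh, hx. }
      rewrite IZf in ex, ky3. unfold a in ex, ky3. nra.
    + assert (lt : IZR (Rz x) < a x + 1/2).
      { destruct (KR x) as [[k1 k2] [k3 k4]].
        destruct (classic (S x)) as [sx|nsx]; [specialize (k3 sx); lra|].
        destruct (Req_dec (IZR (Rz x)) (a x + 1/2)) as [eq|ne]; [|lra].
        exfalso. apply oth. split; [|exact nsx]. exists (Rz x - 1)%Z.
        rewrite minus_IZR. simpl. lra. }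
      set (e := a x + 1/2 - IZR (Rz x)).
      assert (epos : 0 < e / INR m) by (unfold e; apply Rdiv_lt_0_compat; lra).
      destruct (minimal_pt X d hd f hf x (e / INR m) epos) as [y hy].
      exists y. destruct (Dint x y) as [D hD].
      assert (mm : INR m * (e / INR m) = e) by (field; lra).
      assert (hy' : a x + a y < IZR D + e) by (unfold a; rewrite hD; nra).
      destruct (KR y) as [[ky1 ky2] _].
      assert (up : (Rz x + Rz y <= D)%Z).
      { apply Z_of_lt. rewrite plus_IZR. unfold e in hy'. lra. }
      pose proof (ZD x y D hD) as lo.
      assert (eqz : (Rz x + Rz y = D)%Z) by lia.
      apply (f_equal IZR) in eqz. rewrite plus_IZR, !IZf, hD in eqz. nra.
  - intro x. exists (Rz x). reflexivity.
  - intro x. destruct (KR x) as [[k1 k2] _]. rewrite IZf in k1, k2. unfold a in k1, k2.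
    assert (w : INR m * (1 / (2 * INR m)) = 1/2) by (field; lra).
    apply Rabs_le. split; nra.
Qed.
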